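(* A Lie-Yamaguti algebra $(\mathfrak h,[\cdot,\cdot]_{\mathfrak h},[\![\cdot,\cdot,\cdot]\!]_{\mathfrak h})$ has a phase space if and only if it is the subadjacent Lie-Yamaguti algebra of some pre-Lie-Yamaguti algebra structure on $\mathfrak h$ (i.e. it admits a compatible pre-Lie-Yamaguti algebra structure).
   Context: All vector spaces are over a field of characteristic $0$ and finite-dimensional. A Lie-Yamaguti algebra is a vector space $\mathfrak g$ with a bilinear skew-symmetric $[\cdot,\cdot]$ and a trilinear $[\![\cdot,\cdot,\cdot]\!]$ skew-symmetric in its first two arguments such that for all $x,y,z,w,t$: (1) $[[x,y],z]+[[y,z],x]+[[z,x],y]+[\![x,y,z]\!]+[\![y,z,x]\!]+[\![z,x,y]\!]=0$; (2) $[\![[x,y],z,w]\!]+[\![[y,z],x,w]\!]+[\![[z,x],y,w]\!]=0$; (3) $[\![x,y,[z,w]]\!]=[[\![x,y,z]\!],w]+[z,[\![x,y,w]\!]]$; (4) $[\![x,y,[\![z,w,t]\!]]\!]=[\![[\![x,y,z]\!],w,t]\!]+[\![z,[\![x,y,w]\!],t]\!]+[\![z,w,[\![x,y,t]\!]]\!]$. A symplectic structure on it is a nondegenerate skew-symmetric bilinear form $\omega$ with $\omega(x,[y,z])+\omega(y,[z,x])+\omega(z,[x,y])=0$ and $\omega(z,[\![x,y,w]\!])-\omega(x,[\![w,z,y]\!])+\omega(y,[\![w,z,x]\!])-\omega(w,[\![x,y,z]\!])=0$. On $\mathfrak h\oplus\mathfrak h^*$ let $\omega_p(x+\alpha,y+\beta)=\langle\alpha,y\rangle-\langle\beta,x\rangle$.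 A phase space of $\mathfrak h$ is a Lie-Yamaguti algebra structure on $\mathfrak h\oplus\mathfrak h^*$ for which $\omega_p$ is a symplectic structure and such that $\mathfrak h$ (with its original brackets, i.e. the brackets restrict to $[\cdot,\cdot]_{\mathfrak h},[\![\cdot,\cdot,\cdot]\!]_{\mathfrak h}$) and $\mathfrak h^*$ are Lie-Yamaguti subalgebras. A pre-Lie-Yamaguti algebra is a vector space $A$ with a bilinear operation $*$ and a trilinear operation $\{\cdot,\cdot,\cdot\}$ such that, writing $[x,y]_C=x*y-y*x$, $(x,y,z)=(x*y)*z-x*(y*z)$ and $\{x,y,z\}_D=\{z,y,x\}-\{z,x,y\}+(y,x,z)-(x,y,z)$, for all $x,y,z,w,t\in A$: (P1) $\{z,[x,y]_C,w\}-\{y*z,x,w\}+\{x*z,y,w\}=0$; (P2) $\{x,y,[z,w]_C\}=z*\{x,y,w\}-w*\{x,y,z\}$; (P3) $\{\{x,y,z\},w,t\}-\{\{x,y,w\},z,t\}-\{x,y,\{z,w,t\}_D\}-\{x,y,\{z,w,t\}\}+\{x,y,\{w,z,t\}\}+\{z,w,\{x,y,t\}\}_D=0$; (P4) $\{z,\{x,y,w\}_D,t\}+\{z,\{x,y,w\},t\}-\{z,\{y,x,w\},t\}+\{z,w,\{x,y,t\}_D\}+\{z,w,\{x,y,t\}\}-\{z,w,\{y,x,t\}\}=\{x,y,\{z,w,t\}\}_D-\{\{x,y,z\}_D,w,t\}$; (P5) $\{x,y,z\}_D*w+\{x,y,z\}*w-\{y,x,z\}*w=\{x,y,z*w\}_D-z*\{x,y,w\}_D$.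 Its subadjacent Lie-Yamaguti algebra has brackets $[x,y]_C$ and $[\![x,y,z]\!]_C=\{x,y,z\}_D+\{x,y,z\}-\{y,x,z\}$. *)

(* Defs.v *)
From HB Require Import structures.
From mathcomp Require Import all_boot all_order all_algebra.
Set Implicit Arguments. Unset Strict Implicit. Unset Printing Implicit Defensive.
Import GRing.Theory.
Local Open Scope ring_scope.

Section Multilin.
Variables (F : fieldType) (T X : lmodType F).

Definition bilin (f : T -> T -> X) : Prop :=
  (forall (a : F) x x' y, f (a *: x + x') y = a *: f x y + f x' y) /\
  (forall (a : F) x y y', f x (a *: y + y') = a *: f x y + f x y').

Definition trilin (f : T -> T -> T -> X) : Prop :=
  (forall (a : F) x x' y z, f (a *: x + x') y z = a *: f x y z + f x' y z) /\
  (forall (a : F) x y y' z, f x (a *: y + y') z = a *: f x y z + f x y' z) /\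
  (forall (a : F) x y z z', f x y (a *: z + z') = a *: f x y z + f x y z').
End Multilin.

Definition is_LY (F : fieldType) (T : lmodType F)
  (br : T -> T -> T) (tr : T -> T -> T -> T) : Prop :=
  bilin br /\ trilin tr /\
  (forall x y, br x y = - br y x) /\
  (forall x y z, tr x y z = - tr y x z) /\
  (forall x y z, br (br x y) z + br (br y z) x + br (br z x) y
                 + tr x y z + tr y z x + tr z x y = 0) /\
  (forall x y z w, tr (br x y) z w + tr (br y z) x w + tr (br z x) y w = 0) /\
  (forall x y z w, tr x y (br z w) = br (tr x y z) w + br z (tr x y w)) /\
  (forall x y z w t, tr x y (tr z w t)
      = tr (tr x y z) w t + tr z (tr x y w) t + tr z w (tr x y t)).

Definition is_symplectic (F : fieldType) (T : lmodType F)
  (br : T -> T -> T) (tr : T -> T -> T -> T) (om : T -> T -> F) : Prop :=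
  bilin (X := F^o) om /\
  (forall x y, om x y = - om y x) /\
  (forall x, (forall y, om x y = 0) -> x = 0) /\
  (forall x y z, om x (br y z) + om y (br z x) + om z (br x y) = 0) /\
  (forall x y z w, om z (tr x y w) - om x (tr w z y) + om y (tr w z x)
                   - om w (tr x y z) = 0).

Definition dual (F : fieldType) (V : vectType F) := 'Hom(V, F^o).
Definition dsum (F : fieldType) (V : vectType F) := (V * dual V)%type.

Definition omega_p (F : fieldType) (V : vectType F) (u v : dsum V) : F :=
  (u.2 v.1 : F) - (v.2 u.1 : F).

Definition is_phase_space (F : fieldType) (V : vectType F)
  (br : V -> V -> V) (tr : V -> V -> V -> V)
  (Br : dsum V -> dsum V -> dsum V)
  (Tr : dsum V -> dsum V -> dsum V -> dsum V) : Prop :=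
  is_LY Br Tr /\ is_symplectic Br Tr (@omega_p F V) /\
  (forall x y : V, Br (x, 0) (y, 0) = (br x y, 0)) /\
  (forall x y z : V, Tr (x, 0) (y, 0) (z, 0) = (tr x y z, 0)) /\
  (* h^* is a subalgebra *)
  (forall a b : dual V, (Br (0, a) (0, b)).1 = 0) /\
  (forall a b c : dual V, (Tr (0, a) (0, b) (0, c)).1 = 0).

Definition has_phase_space (F : fieldType) (V : vectType F)
  (br : V -> V -> V) (tr : V -> V -> V -> V) : Prop :=
  exists Br Tr, @is_phase_space F V br tr Br Tr.

Section PreLY.
Variables (F : fieldType) (A : lmodType F)
  (mul : A -> A -> A) (brc : A -> A -> A -> A).

Definition comC x y := mul x y - mul y x.
Definition assoc x y z := mul (mul x y) z - mul x (mul y z).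
Definition brcD x y z := brc z y x - brc z x y + assoc y x z - assoc x y z.

Definition is_preLY : Prop :=
  bilin mul /\ trilin brc /\
  (forall x y z w, brc z (comC x y) w - brc (mul y z) x w + brc (mul x z) y w = 0) /\
  (forall x y z w, brc x y (comC z w) = mul z (brc x y w) - mul w (brc x y z)) /\
  (forall x y z w t, brc (brc x y z) w t - brc (brc x y w) z t
      - brc x y (brcD z w t) - brc x y (brc z w t) + brc x y (brc w z t)
      + brcD z w (brc x y t) = 0) /\
  (forall x y z w t, brc z (brcD x y w) t + brc z (brc x y w) t - brc z (brc y x w) t
      + brc z w (brcD x y t) + brc z w (brc x y t) - brc z w (brc y x t)
      = brcD x y (brc z w t) - brc (brcD x y z) w t) /\
  (forall x y z w, mul (brcD x y z) w + mul (brc x y z) w - mul (brc y x z) w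
      = brcD x y (mul z w) - mul z (brcD x y w)).

Definition trC x y z := brcD x y z + brc x y z - brc y x z.
End PreLY.

(* Main.v *)
From HB Require Import structures.
From mathcomp Require Import all_boot all_order all_algebra.
From mathcomp Require Import ring.
Require Import Defs.
Set Implicit Arguments. Unset Strict Implicit. Unset Printing Implicit Defensive.
Import GRing.Theory.
Local Open Scope ring_scope.

Section DualFacts.
Variables (F : fieldType) (V : vectType F).
Local Notation n := (\dim (fullv : {vspace V})).
Local Notation e := (vbasis (fullv : {vspace V})).
Definition dco (i : 'I_n) : dual V := linfun (coord e i : V -> F^o).
Lemma dcoE i v : dco i v = coord e i v. Proof. by rewrite lfunE. Qed.
Lemma vexp v : v = \sum_i coord e i v *: e`_i. Proof. exact: coord_vbasis (memvf v). Qed.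
Lemma dualsep u v : (forall a : dual V, a u = a v) -> u = v.
Proof.
move=> H; rewrite (vexp u) (vexp v); apply: eq_bigr => i _.
by have := H (dco i); rewrite !dcoE => ->.
Qed.
Lemma dualexp (a : dual V) : a = \sum_(i < n) a e`_i *: dco i.
Proof.
apply/lfunP => v; rewrite sum_lfunE {1}(vexp v) linear_sum; apply: eq_bigr => i _.
rewrite linearZ scale_lfunE dcoE /=.
exact: mulrC.
Qed.
Definition mkdual (f : V -> F) : dual V := \sum_(i < n) f e`_i *: dco i.
Lemma mkdualE f : (forall k x y, f (k *: x + y) = k * f x + f y) ->
  forall v, mkdual f v = f v.
Proof.
move=> Hf v.
have f0 : f 0 = 0.
  by have := Hf 1 0 0; rewrite scaler0 addr0 mul1r => H; apply: (addrI (f 0)); rewrite -H addr0.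
have fD x y : f (x + y) = f x + f y.
  by have := Hf 1 x y; rewrite scale1r mul1r.
have fZ k x : f (k *: x) = k * f x by rewrite -[k *: x]addr0 Hf f0 addr0.
rewrite /mkdual sum_lfunE {2}(vexp v) (big_morph f fD f0).
apply: eq_bigr => i _; by rewrite scale_lfunE dcoE fZ /= mulrC.
Qed.
Definition undual (phi : dual V -> F) : V := \sum_(i < n) phi (dco i) *: e`_i.
Lemma undualE phi : (forall k a b, phi (k *: a + b) = k * phi a + phi b) ->
  forall a : dual V, a (undual phi) = phi a.
Proof.
move=> Hf a.
have f0 : phi 0 = 0.
  by have := Hf 1 0 0; rewrite scaler0 addr0 mul1r => H; apply: (addrI (phi 0)); rewrite -H addr0.
have fD x y : phi (x + y) = phi x + phi y.
  by have := Hf 1 x y; rewrite scale1r mul1r.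
have fZ k x : phi (k *: x) = k * phi x by rewrite -[k *: x]addr0 Hf f0 addr0.
rewrite /undual linear_sum {2}(dualexp a) (big_morph phi fD f0).
apply: eq_bigr => i _; by rewrite linearZ fZ /= mulrC.
Qed.
End DualFacts.

Section ML.
Variables (F : fieldType) (T X : lmodType F).
Section Bi.
Variables (f : T -> T -> X) (H : bilin f).
Lemma blD1 x x' y : f (x + x') y = f x y + f x' y.
Proof. by have := H.1 1 x x' y; rewrite !scale1r. Qed.
Lemma bl01 y : f 0 y = 0.
Proof. by have := blD1 0 0 y; rewrite addr0 => E; apply: (addrI (f 0 y)); rewrite -E addr0. Qed.
Lemma blZ1 k x y : f (k *: x) y = k *: f x y.
Proof. by have := H.1 k x 0 y; rewrite !addr0 bl01 addr0. Qed.
Lemma blN1 x y : f (- x) y = - f x y.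
Proof. by rewrite -scaleN1r blZ1 scaleN1r. Qed.
Lemma blB1 x x' y : f (x - x') y = f x y - f x' y.
Proof. by rewrite blD1 blN1. Qed.
Lemma blD2 x y y' : f x (y + y') = f x y + f x y'.
Proof. by have := H.2 1 x y y'; rewrite !scale1r. Qed.
Lemma bl02 x : f x 0 = 0.
Proof. by have := blD2 x 0 0; rewrite addr0 => E; apply: (addrI (f x 0)); rewrite -E addr0. Qed.
Lemma blZ2 k x y : f x (k *: y) = k *: f x y.
Proof. by have := H.2 k x y 0; rewrite !addr0 bl02 addr0. Qed.
Lemma blN2 x y : f x (- y) = - f x y.
Proof. by rewrite -scaleN1r blZ2 scaleN1r. Qed.
Lemma blB2 x y y' : f x (y - y') = f x y - f x y'.
Proof. by rewrite blD2 blN2. Qed.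
End Bi.
Section Tri.
Variables (f : T -> T -> T -> X) (H : trilin f).
Lemma tlD1 x x' y z : f (x + x') y z = f x y z + f x' y z.
Proof. by have := H.1 1 x x' y z; rewrite !scale1r. Qed.
Lemma tl01 y z : f 0 y z = 0.
Proof. by have := tlD1 0 0 y z; rewrite addr0 => E; apply: (addrI (f 0 y z)); rewrite -E addr0. Qed.
Lemma tlZ1 k x y z : f (k *: x) y z = k *: f x y z.
Proof. by have := H.1 k x 0 y z; rewrite !addr0 tl01 addr0. Qed.
Lemma tlN1 x y z : f (- x) y z = - f x y z.
Proof. by rewrite -scaleN1r tlZ1 scaleN1r. Qed.
Lemma tlB1 x x' y z : f (x - x') y z = f x y z - f x' y z.
Proof. by rewrite tlD1 tlN1. Qed.
Lemma tlD2 x y y' z : f x (y + y') z = f x y z + f x y' z.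
Proof. by have := H.2.1 1 x y y' z; rewrite !scale1r. Qed.
Lemma tl02 x z : f x 0 z = 0.
Proof. by have := tlD2 x 0 0 z; rewrite addr0 => E; apply: (addrI (f x 0 z)); rewrite -E addr0. Qed.
Lemma tlZ2 k x y z : f x (k *: y) z = k *: f x y z.
Proof. by have := H.2.1 k x y 0 z; rewrite !addr0 tl02 addr0. Qed.
Lemma tlN2 x y z : f x (- y) z = - f x y z.
Proof. by rewrite -scaleN1r tlZ2 scaleN1r. Qed.
Lemma tlB2 x y y' z : f x (y - y') z = f x y z - f x y' z.
Proof. by rewrite tlD2 tlN2. Qed.
Lemma tlD3 x y z z' : f x y (z + z') = f x y z + f x y z'.
Proof. by have := H.2.2 1 x y z z'; rewrite !scale1r. Qed.
Lemma tl03 x y : f x y 0 = 0.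
Proof. by have := tlD3 x y 0 0; rewrite addr0 => E; apply: (addrI (f x y 0)); rewrite -E addr0. Qed.
Lemma tlZ3 k x y z : f x y (k *: z) = k *: f x y z.
Proof. by have := H.2.2 k x y z 0; rewrite !addr0 tl03 addr0. Qed.
Lemma tlN3 x y z : f x y (- z) = - f x y z.
Proof. by rewrite -scaleN1r tlZ3 scaleN1r. Qed.
Lemma tlB3 x y z z' : f x y (z - z') = f x y z - f x y z'.
Proof. by rewrite tlD3 tlN3. Qed.
End Tri.
End ML.

Section Pairs.
Variables (F : fieldType) (V : vectType F).
Lemma sndD (u v : dsum V) : (u + v).2 = u.2 + v.2. Proof. by []. Qed.
Lemma fstD (u v : dsum V) : (u + v).1 = u.1 + v.1. Proof. by []. Qed.
Lemma sndN (u : dsum V) : (- u).2 = - u.2. Proof. by []. Qed.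
Lemma fstN (u : dsum V) : (- u).1 = - u.1. Proof. by []. Qed.
Lemma sndZ k (u : dsum V) : (k *: u).2 = k *: u.2. Proof. by []. Qed.
Lemma fstZ k (u : dsum V) : (k *: u).1 = k *: u.1. Proof. by []. Qed.
Lemma snd0 : (0 : dsum V).2 = 0. Proof. by []. Qed.
Lemma fst0 : (0 : dsum V).1 = 0. Proof. by []. Qed.
Lemma splitu (u : dsum V) : u = ((u.1, 0) : dsum V) + (0, u.2).
Proof. by case: u => x a; apply: injective_projections; rewrite /= ?addr0 ?add0r. Qed.
Lemma hatD (x y : V) : ((x + y, 0) : dsum V) = (x, 0) + (y, 0).
Proof. by apply: injective_projections; rewrite /= ?addr0. Qed.
Lemma hatZ k (x : V) : ((k *: x, 0) : dsum V) = k *: (x, 0).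
Proof. by apply: injective_projections; rewrite /= ?scaler0. Qed.
Lemma chkD (a b : dual V) : ((0, a + b) : dsum V) = (0, a) + (0, b).
Proof. by apply: injective_projections; rewrite /= ?addr0. Qed.
Lemma chkZ k (a : dual V) : ((0, k *: a) : dsum V) = k *: (0, a).
Proof. by apply: injective_projections; rewrite /= ?scaler0. Qed.
Lemma hD (a : dual V) x y : a (x + y) = a x + a y. Proof. exact: linearD. Qed.
Lemma hN (a : dual V) x : a (- x) = - a x. Proof. exact: linearN. Qed.
Lemma hZ (a : dual V) k x : a (k *: x) = k * a x. Proof. exact: linearZ. Qed.
Lemma h0 (a : dual V) : a 0 = 0. Proof. exact: linear0. Qed.
End Pairs.

Ltac lc_goal := apply/eqP; rewrite -subr_eq0; apply/eqP.
Ltac to0 H := move/eqP: H; rewrite -subr_eq0 => /eqP H.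
Ltac genatoms := repeat match goal with |- context [fun_of_lfun ?h ?t] =>
  let z := fresh "z" in set z := (fun_of_lfun h t); clearbody z end.
Ltac lc1 H := to0 H; revert H; genatoms; intro H; let T := type of H in match T with ?A = _ =>
  lc_goal; match goal with |- ?G = 0 =>
   first [ (transitivity A; [ring | by rewrite H])
         | (transitivity (- A); [ring | by rewrite H; ring]) ] end end.
Ltac lc2 H1 H2 := to0 H1; to0 H2; revert H1 H2; genatoms; intros H1 H2;
  let T1 := type of H1 in let T2 := type of H2 in
  match T1 with ?A1 = _ => match T2 with ?A2 = _ =>
  lc_goal; match goal with |- ?G = 0 =>
   first [ (transitivity (A1 + A2); [ring | by rewrite H1 H2; ring])
         | (transitivity (A1 - A2); [ring | by rewrite H1 H2; ring])
         | (transitivity (- A1 + A2); [ring | by rewrite H1 H2; ring])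
         | (transitivity (- A1 - A2); [ring | by rewrite H1 H2; ring]) ]
  end end end.

Ltac lcg1 H := to0 H; revert H; genatoms; intro H; let T := type of H in match T with ?A = _ =>
  lc_goal; match goal with |- ?G = 0 =>
   first [ (transitivity A; [ring | by rewrite H])
         | (transitivity (- A); [ring | by rewrite H; ring]) ] end end.

Arguments brcD : simpl never.
Arguments trC : simpl never.
Arguments comC : simpl never.
Arguments assoc : simpl never.

Module FwdM.
Section Fwd.
Variables (F : fieldType) (V : vectType F) (br : V -> V -> V) (tr : V -> V -> V -> V)
  (Br : dsum V -> dsum V -> dsum V) (Tr : dsum V -> dsum V -> dsum V -> dsum V).
Hypothesis HP : is_phase_space br tr Br Tr.
Local Notation hat x := ((x, 0) : dsum V).
Local Notation chk a := ((0, a) : dsum V).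

Let BrL : bilin Br. Proof. by case: HP => [[]]. Qed.
Let TrL : trilin Tr. Proof. by case: HP => [[_ []]]. Qed.
Let BrS u v : Br u v = - Br v u. Proof. by case: HP => [[_ [_ [H _]]] _]. Qed.
Let TrS u v w : Tr u v w = - Tr v u w. Proof. by case: HP => [[_ [_ [_ [H _]]]] _]. Qed.
Let J1 x y z : Br (Br x y) z + Br (Br y z) x + Br (Br z x) y
                 + Tr x y z + Tr y z x + Tr z x y = 0.
Proof. by case: HP => [[_ [_ [_ [_ [H _]]]]] _]. Qed.
Let J2 x y z w : Tr (Br x y) z w + Tr (Br y z) x w + Tr (Br z x) y w = 0.
Proof. by case: HP => [[_ [_ [_ [_ [_ [H _]]]]]] _]. Qed.
Let J3 x y z w : Tr x y (Br z w) = Br (Tr x y z) w + Br z (Tr x y w).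
Proof. by case: HP => [[_ [_ [_ [_ [_ [_ [H _]]]]]]] _]. Qed.
Let J4 x y z w t : Tr x y (Tr z w t)
      = Tr (Tr x y z) w t + Tr z (Tr x y w) t + Tr z w (Tr x y t).
Proof. by case: HP => [[_ [_ [_ [_ [_ [_ [_ H]]]]]]] _]. Qed.
Let S1 x y z : omega_p x (Br y z) + omega_p y (Br z x) + omega_p z (Br x y) = 0.
Proof. by case: HP => [_ [[_ [_ [_ [H _]]]] _]]. Qed.
Let S2 x y z w : omega_p z (Tr x y w) - omega_p x (Tr w z y) + omega_p y (Tr w z x)
                   - omega_p w (Tr x y z) = 0.
Proof. by case: HP => [_ [[_ [_ [_ [_ H]]]] _]]. Qed.
Let Bhh x y : Br (hat x) (hat y) = hat (br x y).
Proof. by case: HP => [_ [_ [H _]]]. Qed.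
Let Thhh x y z : Tr (hat x) (hat y) (hat z) = hat (tr x y z).
Proof. by case: HP => [_ [_ [_ [H _]]]]. Qed.

Definition rho x a : dual V := (Br (hat x) (chk a)).2.
Definition mu y z a : dual V := (Tr (chk a) (hat y) (hat z)).2.
Definition Dp x y a : dual V := (Tr (hat x) (hat y) (chk a)).2.

Lemma PBr_uh u y : (Br u (hat y)).2 = - rho y u.2.
Proof. by rewrite {1}(splitu u) (blD1 BrL) Bhh sndD /= add0r BrS sndN. Qed.
Lemma PBr_hu x u : (Br (hat x) u).2 = rho x u.2.
Proof. by rewrite {1}(splitu u) (blD2 BrL) Bhh sndD /= add0r. Qed.
Lemma PTr_uhh u y z : (Tr u (hat y) (hat z)).2 = mu y z u.2.
Proof. by rewrite {1}(splitu u) (tlD1 TrL) Thhh sndD /= add0r. Qed.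
Lemma PTr_huh x u z : (Tr (hat x) u (hat z)).2 = - mu x z u.2.
Proof. by rewrite {1}(splitu u) (tlD2 TrL) Thhh sndD /= add0r TrS sndN. Qed.
Lemma PTr_hhu x y u : (Tr (hat x) (hat y) u).2 = Dp x y u.2.
Proof. by rewrite {1}(splitu u) (tlD3 TrL) Thhh sndD /= add0r. Qed.

Lemma rhoZ x k a b : rho x (k *: a + b) = k *: rho x a + rho x b.
Proof. by rewrite /rho chkD chkZ (blD2 BrL) (blZ2 BrL). Qed.
Lemma rhoD x a b : rho x (a + b) = rho x a + rho x b.
Proof. by rewrite /rho chkD (blD2 BrL). Qed.
Lemma rhoN x a : rho x (- a) = - rho x a.
Proof. by rewrite -scaleN1r -[_ *: a]addr0 rhoZ /rho (bl02 BrL) addr0 scaleN1r. Qed.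
Lemma muZ y z k a b : mu y z (k *: a + b) = k *: mu y z a + mu y z b.
Proof. by rewrite /mu chkD chkZ (tlD1 TrL) (tlZ1 TrL). Qed.
Lemma muN y z a : mu y z (- a) = - mu y z a.
Proof. by rewrite -scaleN1r -[_ *: a]addr0 muZ /mu (tl01 TrL) addr0 scaleN1r. Qed.
Lemma DpN x y a : Dp x y (- a) = - Dp x y a.
Proof.
rewrite -scaleN1r -[_ *: a]addr0 /Dp chkD chkZ (tlD3 TrL) (tlZ3 TrL) (tl03 TrL).
by rewrite addr0 scaleN1r.
Qed.
Lemma rhoV k x x' a : rho (k *: x + x') a = k *: rho x a + rho x' a.
Proof. by rewrite /rho hatD hatZ (blD1 BrL) (blZ1 BrL). Qed.
Lemma muV1 k y y' z a : mu (k *: y + y') z a = k *: mu y z a + mu y' z a.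
Proof. by rewrite /mu hatD hatZ (tlD2 TrL) (tlZ2 TrL). Qed.
Lemma muV2 k y z z' a : mu y (k *: z + z') a = k *: mu y z a + mu y z' a.
Proof. by rewrite /mu hatD hatZ (tlD3 TrL) (tlZ3 TrL). Qed.
Lemma DpS x y a : Dp y x a = - Dp x y a.
Proof. by rewrite /Dp TrS sndN. Qed.

Definition mul x y := undual (fun a => - rho x a y).
Definition brc x y z := undual (fun a => mu z y a x).

Lemma mulE (a : dual V) x y : a (mul x y) = - rho x a y.
Proof.
rewrite undualE // => k b c; rewrite rhoZ add_lfunE scale_lfunE.
by rewrite /GRing.scale /=; ring.
Qed.
Lemma brcE (a : dual V) x y z : a (brc x y z) = mu z y a x.
Proof.
rewrite undualE // => k b c; rewrite muZ add_lfunE scale_lfunE.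
by rewrite /GRing.scale /=.
Qed.

Ltac hideD := repeat match goal with |- context [brcD ?m ?b ?x ?y ?z] =>
  let D := fresh "D" in let HD := fresh "HD" in
  have [D HD] : {D | D = brcD m b x y z} := exist _ _ erefl;
  rewrite -HD end.
Ltac unhideD := repeat match goal with HD : ?D = brcD _ _ _ _ _ |- _ => subst D end.
Ltac lexpD := hideD; rewrite ?(hD, hN, h0); unhideD.
Ltac lexp := rewrite ?(hD, hN, h0).
Ltac psimp := rewrite ?(Bhh, Thhh, sndD, snd0, sndN, PBr_uh, PBr_hu, PTr_uhh, PTr_huh, PTr_hhu) /=.

Ltac evalE E t := have := congr1 (fun h : dual V => h t) E => /= {}E;
  rewrite ?(add_lfunE, opp_lfunE, zero_lfunE) in E; rewrite ?(add_lfunE, opp_lfunE).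

Lemma I1f x y a : Dp x y a = - rho (br x y) a + rho x (rho y a) - rho y (rho x a)
   + mu y x a - mu x y a.
Proof.
have := congr1 snd (J1 (hat x) (hat y) (chk a)); psimp; rewrite rhoN => E.
apply/lfunP => t; evalE E t; lc1 E.
Qed.

Lemma I2f y z w a : mu (br z w) y a = mu z y (rho w a) - mu w y (rho z a).
Proof.
have := congr1 snd (J2 (hat z) (hat w) (chk a) (hat y)); psimp; rewrite muN => E.
apply/lfunP => t; evalE E t; lc1 E.
Qed.

Lemma I3af w x y a : mu w (br x y) a = - rho y (mu w x a) + rho x (mu w y a).
Proof.
have := congr1 snd (J3 (chk a) (hat w) (hat x) (hat y)); psimp => E.
apply/lfunP => t; evalE E t.
lc1 E.
Qed.

Lemma I3bf x y z a : Dp x y (rho z a) = rho (tr x y z) a + rho z (Dp x y a).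
Proof.
have := congr1 snd (J3 (hat x) (hat y) (hat z) (chk a)); psimp => E.
apply/lfunP => t; evalE E t; lc1 E.
Qed.

Lemma I4af y z w t a : mu y (tr z w t) a
   = mu w t (mu y z a) - mu z t (mu y w a) + Dp z w (mu y t a).
Proof.
have := congr1 snd (J4 (chk a) (hat y) (hat z) (hat w) (hat t)); psimp => E.
apply/lfunP => s; evalE E s; lc1 E.
Qed.

Lemma I4bf x y w t a : Dp x y (mu w t a)
   = mu w t (Dp x y a) + mu (tr x y w) t a + mu w (tr x y t) a.
Proof.
have := congr1 snd (J4 (hat x) (hat y) (chk a) (hat w) (hat t)); psimp => E.
apply/lfunP => s; evalE E s; lc1 E.
Qed.

Lemma rhoD1 x x' a : rho (x + x') a = rho x a + rho x' a.
Proof. by have := rhoV 1 x x' a; rewrite !scale1r. Qed.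
Lemma rhoN1 x a : rho (- x) a = - rho x a.
Proof. by rewrite -scaleN1r -[_ *: x]addr0 rhoV /rho (bl01 BrL) addr0 scaleN1r. Qed.
Lemma rhoB1 x x' a : rho (x - x') a = rho x a - rho x' a.
Proof. by rewrite rhoD1 rhoN1. Qed.

Lemma mulL : bilin mul.
Proof.
split => k x y z; apply: dualsep => a;
  rewrite ?linearD ?linearZ /= !mulE ?rhoV ?add_lfunE ?scale_lfunE ?linearD ?linearZ /=;
  rewrite /GRing.scale /=; ring.
Qed.
Lemma brcL : trilin brc.
Proof.
split; [|split] => k x y z w; apply: dualsep => a;
  rewrite ?linearD ?linearZ /= !brcE ?muV1 ?muV2 ?add_lfunE ?scale_lfunE ?linearD ?linearZ /=;
  by rewrite /GRing.scale /=.
Qed.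

Lemma comCf x y : comC mul x y = br x y.
Proof.
apply: dualsep => a; rewrite /comC linearB /= !mulE.
have := S1 (chk a) (hat x) (hat y); rewrite /omega_p Bhh; psimp.
rewrite ?(add_lfunE, opp_lfunE, zero_lfunE, linear0) => E; lc1 E.
Qed.

Lemma brcDE (a : dual V) x y z : a (brcD mul brc x y z) = - Dp x y a z.
Proof.
have h : rho (mul y x) a = rho (br y x) a + rho (mul x y) a.
  by rewrite -comCf /comC rhoB1 subrK.
rewrite /brcD /assoc; lexp; rewrite !brcE !mulE h (DpS y x) (I1f y x).
rewrite ?(add_lfunE, opp_lfunE).
rewrite ?(add_lfunE, opp_lfunE); ring.
Qed.

Lemma trCf x y z : trC mul brc x y z = tr x y z.
Proof.
apply: dualsep => a; rewrite /trC linearB linearD /= brcDE !brcE.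
have := S2 (hat x) (hat y) (hat z) (chk a); rewrite /omega_p Thhh; psimp.
rewrite ?(add_lfunE, opp_lfunE, zero_lfunE, linear0) => E; lc1 E.
Qed.

Lemma preLYf : is_preLY mul brc.
Proof.
split; first exact: mulL.
split; first exact: brcL.
split.
  move=> x y z w; rewrite comCf; apply: dualsep => a.
  lexpD; rewrite !(brcE, mulE) I3af.
  rewrite ?(add_lfunE, opp_lfunE); ring.
split.
  move=> x y z w; rewrite comCf; apply: dualsep => a.
  lexpD; rewrite !(brcE, mulE) I2f.
  rewrite ?(add_lfunE, opp_lfunE); ring.
split.
  move=> x y z w t.
  have -> : brcD mul brc z w t = trC mul brc z w t - brc z w t + brc w z t.
    by apply: dualsep => b; rewrite /trC; lexp; ring.
  rewrite trCf ?(tlD3 brcL, tlN3 brcL); apply: dualsep => a.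
  lexpD; rewrite !(brcE, mulE, brcDE).
  have E1 := I4bf z w t y a; have E2 := I4af t z w y a.
  evalE E1 x; evalE E2 x.
  rewrite ?(add_lfunE, opp_lfunE).
  lc2 E1 E2.
split.
  move=> x y z w t.
  have -> : brcD mul brc x y w = trC mul brc x y w - brc x y w + brc y x w.
    by apply: dualsep => b; rewrite /trC; lexp; ring.
  have -> : brcD mul brc x y t = trC mul brc x y t - brc x y t + brc y x t.
    by apply: dualsep => b; rewrite /trC; lexp; ring.
  rewrite !trCf ?(tlD2 brcL, tlN2 brcL, tlD3 brcL, tlN3 brcL); apply: dualsep => a.
  lexpD; rewrite !(brcE, mulE, brcDE).
  have E1 := I4bf x y t w a; evalE E1 z.
  rewrite ?(add_lfunE, opp_lfunE) ?opprK.
  lc1 E1.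
move=> x y z w.
rewrite (_ : mul (brcD mul brc x y z) w + mul (brc x y z) w - mul (brc y x z) w
   = mul (trC mul brc x y z) w); last by rewrite /trC (blB1 mulL (brcD mul brc x y z + brc x y z)) (blD1 mulL (brcD mul brc x y z)).
rewrite trCf; apply: dualsep => a.
lexpD; rewrite !(brcE, mulE, brcDE) I3bf.
rewrite ?(add_lfunE, opp_lfunE); ring.
Qed.

Lemma fwd_ex : exists (m : V -> V -> V) (b : V -> V -> V -> V),
  is_preLY m b /\ (forall x y, comC m x y = br x y) /\
  (forall x y z, trC m b x y z = tr x y z).
Proof. by exists mul, brc; split; [exact: preLYf | split; [exact: comCf | exact: trCf]]. Qed.

End Fwd.
End FwdM.

Module BwdM.
Section Bwd.
Variables (F : fieldType) (V : vectType F) (br : V -> V -> V) (tr : V -> V -> V -> V)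
  (mul : V -> V -> V) (brc : V -> V -> V -> V).
Hypothesis HLY : is_LY br tr.
Hypothesis Hpre : is_preLY mul brc.
Hypothesis Hbr : forall x y, comC mul x y = br x y.
Hypothesis Htr : forall x y z, trC mul brc x y z = tr x y z.
Local Notation hat x := ((x, 0) : dsum V).
Local Notation chk a := ((0, a) : dsum V).
Local Notation cC := (comC mul).
Local Notation tC := (trC mul brc).
Local Notation bD := (brcD mul brc).

Let mulL : bilin mul. Proof. by case: Hpre. Qed.
Let brcL : trilin brc. Proof. by case: Hpre => _ []. Qed.
Let P1 x y z w : brc z (cC x y) w - brc (mul y z) x w + brc (mul x z) y w = 0.
Proof. by case: Hpre => _ [_ [H _]]. Qed.
Let P2 x y z w : brc x y (cC z w) = mul z (brc x y w) - mul w (brc x y z).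
Proof. by case: Hpre => _ [_ [_ [H _]]]. Qed.
Let P3 x y z w t : brc (brc x y z) w t - brc (brc x y w) z t
      - brc x y (bD z w t) - brc x y (brc z w t) + brc x y (brc w z t)
      + bD z w (brc x y t) = 0.
Proof. by case: Hpre => _ [_ [_ [_ [H _]]]]. Qed.
Let P4 x y z w t : brc z (bD x y w) t + brc z (brc x y w) t - brc z (brc y x w) t
      + brc z w (bD x y t) + brc z w (brc x y t) - brc z w (brc y x t)
      = bD x y (brc z w t) - brc (bD x y z) w t.
Proof. by case: Hpre => _ [_ [_ [_ [_ [H _]]]]]. Qed.
Let P5 x y z w : mul (bD x y z) w + mul (brc x y z) w - mul (brc y x z) w
      = bD x y (mul z w) - mul z (bD x y w).
Proof. by case: Hpre => _ [_ [_ [_ [_ [_ H]]]]]. Qed.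
Let brL : bilin cC.
Proof. by case: HLY => [[H1 H2] _]; split => *; rewrite !Hbr ?H1 ?H2. Qed.
Let trL : trilin tC.
Proof. by case: HLY => [_ [[H1 [H2 H3]] _]]; split; [|split] => *; rewrite !Htr ?H1 ?H2 ?H3. Qed.
Let brS x y : cC x y = - cC y x.
Proof. by rewrite !Hbr; case: HLY => [_ [_ [H _]]]. Qed.
Let trS x y z : tC x y z = - tC y x z.
Proof. by rewrite !Htr; case: HLY => [_ [_ [_ [H _]]]]. Qed.
Let L1 x y z : cC (cC x y) z + cC (cC y z) x + cC (cC z x) y
                 + tC x y z + tC y z x + tC z x y = 0.
Proof. by rewrite !Hbr !Htr; case: HLY => [_ [_ [_ [_ [H _]]]]]. Qed.
Let L2 x y z w : tC (cC x y) z w + tC (cC y z) x w + tC (cC z x) y w = 0.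
Proof. by rewrite !Hbr !Htr; case: HLY => [_ [_ [_ [_ [_ [H _]]]]]]. Qed.
Let L3 x y z w : tC x y (cC z w) = cC (tC x y z) w + cC z (tC x y w).
Proof. by rewrite !Hbr !Htr; case: HLY => [_ [_ [_ [_ [_ [_ [H _]]]]]]]. Qed.
Let L4 x y z w t : tC x y (tC z w t)
      = tC (tC x y z) w t + tC z (tC x y w) t + tC z w (tC x y t).
Proof. by rewrite !Htr; case: HLY => [_ [_ [_ [_ [_ [_ [_ H]]]]]]]. Qed.

Ltac vlin := rewrite ?(blD1 mulL, blZ1 mulL, blN1 mulL, blD2 mulL, blZ2 mulL, blN2 mulL,
  tlD1 brcL, tlZ1 brcL, tlN1 brcL, tlD2 brcL, tlZ2 brcL, tlN2 brcL,
  tlD3 brcL, tlZ3 brcL, tlN3 brcL).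
Ltac lexpZ := rewrite ?(hD, hN, hZ, h0).
Ltac fring := rewrite /GRing.scale /=; ring.

Lemma bDl3 x y k t t' : bD x y (k *: t + t') = k *: bD x y t + bD x y t'.
Proof. apply: dualsep => a; rewrite /brcD /assoc; vlin; lexpZ; fring. Qed.
Lemma bDl1 x x' k y t : bD (k *: x + x') y t = k *: bD x y t + bD x' y t.
Proof. apply: dualsep => a; rewrite /brcD /assoc; vlin; lexpZ; fring. Qed.
Lemma bDl2 x y y' k t : bD x (k *: y + y') t = k *: bD x y t + bD x y' t.
Proof. apply: dualsep => a; rewrite /brcD /assoc; vlin; lexpZ; fring. Qed.
Lemma bDS x y t : bD y x t = - bD x y t.
Proof. apply: dualsep => a; rewrite /brcD /assoc; lexpZ; ring. Qed.

Definition rho x (b : dual V) : dual V := mkdual (fun t => - b (mul x t)).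
Definition mu y z (a : dual V) : dual V := mkdual (fun t => a (brc t z y)).
Definition Dp x y (c : dual V) : dual V := mkdual (fun t => - c (bD x y t)).

Lemma rhoE x b t : rho x b t = - b (mul x t).
Proof. by rewrite mkdualE // => k u v; vlin; lexpZ; fring. Qed.
Lemma muE y z a t : mu y z a t = a (brc t z y).
Proof. by rewrite mkdualE // => k u v; vlin; lexpZ; fring. Qed.
Lemma DpE x y c t : Dp x y c t = - c (bD x y t).
Proof. by rewrite mkdualE // => k u v; rewrite bDl3; lexpZ; fring. Qed.

Ltac opE := rewrite ?(add_lfunE, opp_lfunE, scale_lfunE, zero_lfunE, rhoE, muE, DpE).

Lemma rhoZ x k a b : rho x (k *: a + b) = k *: rho x a + rho x b.
Proof. apply/lfunP => t; opE; fring. Qed.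
Lemma muZ y z k a b : mu y z (k *: a + b) = k *: mu y z a + mu y z b.
Proof. apply/lfunP => t; opE; fring. Qed.
Lemma DpZ x y k a b : Dp x y (k *: a + b) = k *: Dp x y a + Dp x y b.
Proof. apply/lfunP => t; opE; fring. Qed.
Lemma rhoD x a b : rho x (a + b) = rho x a + rho x b.
Proof. apply/lfunP => t; opE; ring. Qed.
Lemma muD y z a b : mu y z (a + b) = mu y z a + mu y z b.
Proof. apply/lfunP => t; opE; ring. Qed.
Lemma DpD x y a b : Dp x y (a + b) = Dp x y a + Dp x y b.
Proof. apply/lfunP => t; opE; ring. Qed.
Lemma rhoN x a : rho x (- a) = - rho x a.
Proof. apply/lfunP => t; opE; ring. Qed.
Lemma muN y z a : mu y z (- a) = - mu y z a.
Proof. apply/lfunP => t; opE; ring. Qed.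
Lemma DpN x y a : Dp x y (- a) = - Dp x y a.
Proof. apply/lfunP => t; opE; ring. Qed.
Lemma rho0 x : rho x 0 = 0.
Proof. apply/lfunP => t; opE; ring. Qed.
Lemma mu0 y z : mu y z 0 = 0.
Proof. apply/lfunP => t; opE; ring. Qed.
Lemma Dp0 x y : Dp x y 0 = 0.
Proof. apply/lfunP => t; opE; ring. Qed.
Lemma rhoV k x x' a : rho (k *: x + x') a = k *: rho x a + rho x' a.
Proof. apply/lfunP => t; opE; vlin; lexpZ; fring. Qed.
Lemma muV1 k y y' z a : mu (k *: y + y') z a = k *: mu y z a + mu y' z a.
Proof. apply/lfunP => t; opE; vlin; lexpZ; fring. Qed.
Lemma muV2 k y z z' a : mu y (k *: z + z') a = k *: mu y z a + mu y z' a.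
Proof. apply/lfunP => t; opE; vlin; lexpZ; fring. Qed.
Lemma DpV1 k x x' y a : Dp (k *: x + x') y a = k *: Dp x y a + Dp x' y a.
Proof. apply/lfunP => t; opE; rewrite bDl1; lexpZ; fring. Qed.
Lemma DpV2 k x y y' a : Dp x (k *: y + y') a = k *: Dp x y a + Dp x y' a.
Proof. apply/lfunP => t; opE; rewrite bDl2; lexpZ; fring. Qed.
Lemma DpS x y a : Dp y x a = - Dp x y a.
Proof. apply/lfunP => t; opE; rewrite bDS; lexpZ; ring. Qed.
Lemma rhoD1 x x' a : rho (x + x') a = rho x a + rho x' a.
Proof. by have := rhoV 1 x x' a; rewrite !scale1r. Qed.
Lemma rhoN1 x a : rho (- x) a = - rho x a.
Proof. apply/lfunP => t; opE; vlin; lexpZ; ring. Qed.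

Ltac hev := rewrite ?(add_lfunE, opp_lfunE, zero_lfunE).
Ltac evalE E t := have := congr1 (fun h : dual V => h t) E => /= {}E;
  rewrite ?(add_lfunE, opp_lfunE, zero_lfunE) in E; rewrite ?(add_lfunE, opp_lfunE, zero_lfunE).
Ltac nrm := rewrite /trC /comC; vlin; lexpZ.
Ltac nrmH h := rewrite /trC /comC in h; rewrite ?(blD1 mulL, blZ1 mulL, blN1 mulL, blD2 mulL, blZ2 mulL, blN2 mulL,
  tlD1 brcL, tlZ1 brcL, tlN1 brcL, tlD2 brcL, tlZ2 brcL, tlN2 brcL,
  tlD3 brcL, tlZ3 brcL, tlN3 brcL) in h; rewrite ?(hD, hN, hZ, h0) in h.

Lemma I1b x y a : Dp x y a = - rho (cC x y) a + rho x (rho y a) - rho y (rho x a)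
   + mu y x a - mu x y a.
Proof. apply/lfunP => t; opE; nrm; ring. Qed.

Lemma I2b y z w a : mu (cC z w) y a = mu z y (rho w a) - mu w y (rho z a).
Proof. apply/lfunP => t; opE; rewrite P2; lexpZ; ring. Qed.

Lemma I3ab w x y a : mu w (cC x y) a = - rho y (mu w x a) + rho x (mu w y a).
Proof.
apply/lfunP => t; opE; have h := congr1 a (P1 x y t w).
nrmH h; nrm; lc1 h.
Qed.

Lemma I3bb x y z a : Dp x y (rho z a) = rho (tC x y z) a + rho z (Dp x y a).
Proof.
apply/lfunP => t; opE; have h := congr1 a (P5 x y z t).
nrmH h; nrm; lc1 h.
Qed.

Lemma I4bb x y w t a : Dp x y (mu w t a)
   = mu w t (Dp x y a) + mu (tC x y w) t a + mu w (tC x y t) a.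
Proof.
apply/lfunP => s; opE; have h := congr1 a (P4 x y s t w).
nrmH h; nrm; lc1 h.
Qed.

Lemma P3op z w t y a :
  mu (tC z w t) y a = mu z y (mu t w a) - mu w y (mu t z a) - mu t y (Dp z w a).
Proof.
apply/lfunP => s; opE; have h := congr1 a (P3 s y z w t).
nrmH h; nrm; lc1 h.
Qed.

Lemma I4ab y z w t a : mu y (tC z w t) a
   = mu w t (mu y z a) - mu z t (mu y w a) + Dp z w (mu y t a).
Proof.
apply/lfunP => s; have E1 := I4bb z w y t a; have E2 := P3op z w y t a.
evalE E1 s; evalE E2 s; lc2 E1 E2.
Qed.

Lemma rhoV0 a : rho 0 a = 0.
Proof. by apply/lfunP => t; opE; rewrite (bl01 mulL) h0 oppr0. Qed.

Lemma I4cb x y z w a : Dp x y (Dp z w a)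
   = Dp (tC x y z) w a + Dp z (tC x y w) a + Dp z w (Dp x y a).
Proof.
rewrite (I1b z w a) (I1b (tC x y z) w a) (I1b z (tC x y w) a) (I1b z w (Dp x y a)).
rewrite ?(DpD, DpN, I3bb x y, I4bb x y, rhoD, rhoN, muD, muN).
rewrite L3 rhoD1.
apply/lfunP => t; hev; ring.
Qed.

Lemma rhoSum6 p1 p2 p3 p4 p5 p6 b : rho (p1 + p2 + p3 + p4 + p5 + p6) b
  = rho p1 b + rho p2 b + rho p3 b + rho p4 b + rho p5 b + rho p6 b.
Proof. by rewrite !rhoD1. Qed.

Lemma I2wb x y z a : Dp (cC x y) z a + Dp (cC y z) x a + Dp (cC z x) y a = 0.
Proof.
rewrite !I1b ?(I2b, I3ab).
have h : rho (cC (cC x y) z + cC (cC y z) x + cC (cC z x) y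
              + tC x y z + tC y z x + tC z x y) a = 0 by rewrite L1 rhoV0.
have I3' p q r b : rho (tC p q r) b = Dp p q (rho r b) - rho r (Dp p q b).
  by rewrite I3bb addrK.
rewrite rhoSum6 !I3' !I1b ?(rhoD, rhoN) in h.
apply/lfunP => t; evalE h t; hev; lc1 h.
Qed.

Definition Br (u v : dsum V) : dsum V := (cC u.1 v.1, rho u.1 v.2 - rho v.1 u.2).
Definition Tr (u v w : dsum V) : dsum V :=
  (tC u.1 v.1 w.1, mu v.1 w.1 u.2 - mu u.1 w.1 v.2 + Dp u.1 v.1 w.2).

Ltac hevZ := rewrite ?(add_lfunE, opp_lfunE, zero_lfunE, scale_lfunE).

Lemma BrLb : bilin Br.
Proof.
split => k [x a] [x' a'] [y b]; apply: injective_projections; rewrite /=.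
- by rewrite brL.1.
- rewrite rhoV rhoZ; apply/lfunP => t; hevZ; fring.
- by rewrite brL.2.
- rewrite rhoV rhoZ; apply/lfunP => t; hevZ; fring.
Qed.

Lemma TrLb : trilin Tr.
Proof.
split; [|split] => k [x a] [x' a'] [y b] [z c]; apply: injective_projections; rewrite /=.
- by rewrite trL.1.
- rewrite muV1 muZ DpV1; apply/lfunP => t; hevZ; fring.
- by rewrite trL.2.1.
- rewrite muV1 muZ DpV2; apply/lfunP => t; hevZ; fring.
- by rewrite trL.2.2.
- rewrite !muV2 DpZ; apply/lfunP => t; hevZ; fring.
Qed.

Lemma BrSb u v : Br u v = - Br v u.
Proof.
case: u v => [x a] [y b]; apply: injective_projections; rewrite /=; first exact: brS.
by rewrite opprB.
Qed.

Lemma TrSb u v w : Tr u v w = - Tr v u w.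
Proof.
case: u v w => [x a] [y b] [z c]; apply: injective_projections; rewrite /=; first exact: trS.
rewrite (DpS x y); apply/lfunP => t; hevZ; ring.
Qed.

Lemma J1b u v w : Br (Br u v) w + Br (Br v w) u + Br (Br w u) v
                 + Tr u v w + Tr v w u + Tr w u v = 0.
Proof.
case: u v w => [x a] [y b] [z c]; apply: injective_projections; rewrite /=; first exact: L1.
rewrite !I1b ?(rhoD, rhoN); apply/lfunP => t; hevZ; ring.
Qed.

Lemma J2b u1 u2 u3 u4 : Tr (Br u1 u2) u3 u4 + Tr (Br u2 u3) u1 u4 + Tr (Br u3 u1) u2 u4 = 0.
Proof.
case: u1 u2 u3 u4 => [x1 a1] [x2 a2] [x3 a3] [x4 a4].
apply: injective_projections; rewrite /=; first exact: L2.
have h := I2wb x1 x2 x3 a4.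
rewrite ?(I2b, muD, muN); apply/lfunP => t; evalE h t; hevZ; lc1 h.
Qed.

Lemma J3b u1 u2 u3 u4 : Tr u1 u2 (Br u3 u4) = Br (Tr u1 u2 u3) u4 + Br u3 (Tr u1 u2 u4).
Proof.
case: u1 u2 u3 u4 => [x1 a1] [x2 a2] [x3 a3] [x4 a4].
apply: injective_projections; rewrite /=; first exact: L3.
rewrite ?(I3ab, DpD, DpN, I3bb, rhoD, rhoN); apply/lfunP => t; hevZ; ring.
Qed.

Lemma J4b u1 u2 u3 u4 u5 : Tr u1 u2 (Tr u3 u4 u5)
      = Tr (Tr u1 u2 u3) u4 u5 + Tr u3 (Tr u1 u2 u4) u5 + Tr u3 u4 (Tr u1 u2 u5).
Proof.
case: u1 u2 u3 u4 u5 => [x1 a1] [x2 a2] [x3 a3] [x4 a4] [x5 a5].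
apply: injective_projections; rewrite /=; first exact: L4.
rewrite (I4ab x2 x3 x4 x5 a1) (I4ab x1 x3 x4 x5 a2) ?(DpD, DpN).
rewrite (I4bb x1 x2 x4 x5 a3) (I4bb x1 x2 x3 x5 a4) (I4cb x1 x2 x3 x4 a5).
rewrite ?(muD, muN, DpD, DpN); apply/lfunP => t; hevZ; ring.
Qed.

Lemma symb : is_symplectic Br Tr (@omega_p F V).
Proof.
split.
  split => k [x a] [x' a'] [y b]; rewrite /omega_p /=; hevZ; rewrite ?(hD, hZ); fring.
split; first by move=> [x a] [y b]; rewrite /omega_p opprB.
split.
  move=> [x a] H.
  have hx : x = 0.
    apply: dualsep => b; have := H (0, b); rewrite /omega_p /= h0 add0r h0.
    by move/eqP; rewrite oppr_eq0 => /eqP.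
  subst x; congr pair; apply/lfunP => y; have := H (y, 0).
  by rewrite /omega_p /= zero_lfunE subr0 => ->; rewrite zero_lfunE.
split.
  move=> [x a] [y b] [z c]; rewrite /omega_p /=; hevZ; opE; nrm; ring.
move=> [x a] [y b] [z c] [w d]; rewrite /omega_p /=; hevZ; opE; nrm; ring.
Qed.

Lemma bwd_ex : has_phase_space br tr.
Proof.
exists Br, Tr; split.
  split; first exact: BrLb. split; first exact: TrLb. split; first exact: BrSb.
  split; first exact: TrSb. split; first exact: J1b. split; first exact: J2b.
  split; first exact: J3b. exact: J4b.
split; first exact: symb.
split.
  move=> x y; apply: injective_projections; rewrite /= ?Hbr //.
  by rewrite !rho0 subrr.
split.
  move=> x y z; apply: injective_projections; rewrite /= ?Htr //.
  by rewrite !mu0 Dp0 subrr addr0.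
split; first by move=> a b /=; rewrite (bl01 brL).
by move=> a b c /=; rewrite (tl01 trL).
Qed.

End Bwd.
End BwdM.

Unset Implicit Arguments.
Theorem theorem4p7 (F : fieldType) (charF0 : [pchar F] =i pred0)
  (V : vectType F) (br : V -> V -> V) (tr : V -> V -> V -> V) :
  is_LY br tr ->
  (has_phase_space br tr <->
   exists (mul : V -> V -> V) (brc : V -> V -> V -> V),
     is_preLY mul brc /\
     (forall x y, comC mul x y = br x y) /\
     (forall x y z, trC mul brc x y z = tr x y z)).
Proof.
move=> HLY; split.
  by case=> Br [Tr HP]; exact: FwdM.fwd_ex HP.
case=> m [b [Hpre [Hbr Htr]]]; exact: BwdM.bwd_ex HLY Hpre Hbr Htr.
Qed.
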